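(* For $n\ge1$, choose a composition $X=(c_1,\dots,c_h)$ of $n$ uniformly at random among all $2^{n-1}$ compositions of $n$, and choose one of the $n$ unit elements uniformly at random, where the elements are arranged so that the first $c_1$ elements have rank 1, the next $c_2$ have rank 2, etc. Then the probability that the chosen element has rank $r$ is $\dfrac{1}{n\,2^{n-1}}\sum_{i=r}^n\binom{n}{i}$, and the expected rank is $(n+3)/4$.
   Context: A composition of $n$ is a sequence of positive integers $(c_1,\dots,c_h)$ with $c_1+\dots+c_h=n$. *)

(* Defs.v *)
From mathcomp Require Import all_boot all_order all_algebra.
Set Implicit Arguments. Unset Strict Implicit. Unset Printing Implicit Defensive.
Import Order.TTheory GRing.Theory Num.Theory.

Definition is_composition (n : nat) (X : seq nat) : bool :=
  all (fun c => 0 < c) X && (sumn X == n).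

Definition rank_seq (X : seq nat) : seq nat :=
  flatten [seq nseq c i.+1 | '(i, c) <- zip (iota 0 (size X)) X].

(* Rank of the j-th element (0-indexed, j < n). *)
Definition elt_rank (X : seq nat) (j : nat) : nat := nth 0 (rank_seq X) j.

Local Open Scope ring_scope.

(* Probability, when X is uniform in the list [comps] and the element j is
   uniform in {0,...,n-1}, that the chosen element has rank r. *)
Definition prob_rank (n : nat) (comps : seq (seq nat)) (r : nat) : rat :=
  (size comps)%:R^-1 *
  \sum_(X <- comps) (n%:R^-1 * \sum_(j < n) (elt_rank X j == r)%:R).

Definition expected_rank (n : nat) (comps : seq (seq nat)) : rat :=
  (size comps)%:R^-1 *
  \sum_(X <- comps) (n%:R^-1 * \sum_(j < n) (elt_rank X j)%:R).

(* Main.v *)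
Require Import Defs.
From mathcomp Require Import all_boot all_order all_algebra.
From mathcomp Require Import zify ring lra.
Import Order.TTheory GRing.Theory Num.Theory.

Definition incr_head (s : seq nat) := if s is c :: s' then c.+1 :: s' else [:: 1].
Fixpoint comp_of (b : seq bool) : seq nat :=
  match b with
  | [::] => [:: 1]
  | true :: b' => 1 :: comp_of b'
  | false :: b' => incr_head (comp_of b')
  end.

Lemma comp_of_cons b : exists c X, comp_of b = c.+1 :: X.
Proof.
elim: b => [|[] b [c [X IH]]] /=; first by exists 0, [::].
  by exists 0, (comp_of b).
by rewrite IH; exists c.+1, X.
Qed.

Lemma comp_pos b : all (fun c => 0 < c) (comp_of b).
Proof.
elim: b => [|[] b IH] //=.
by case: (comp_of_cons b) IH => c [X ->].
Qed.

Lemma comp_sum b : sumn (comp_of b) = (size b).+1.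
Proof.
elim: b => [|[] b IH] //=; first by rewrite IH.
by case: (comp_of_cons b) IH => c [X ->] /= E; lia.
Qed.

Lemma comp_of_inj : injective comp_of.
Proof.
elim=> [|x b1 IH] [|y b2] //=.
- case: y => /=; first by case: (comp_of_cons b2) => c [X ->].
  by case: (comp_of_cons b2) => c [X ->].
- case: x => /=; first by case: (comp_of_cons b1) => c [X ->].
  by case: (comp_of_cons b1) => c [X ->].
- case: x; case: y => /=.
  + by case=> /IH ->.
  + by case: (comp_of_cons b2) => c [X ->].
  + by case: (comp_of_cons b1) => c [X ->].
  + case: (comp_of_cons b1) => c [X E1]; case: (comp_of_cons b2) => d [Y E2].
    rewrite E1 E2 /= => -[cd XY].
    have : comp_of b1 = comp_of b2 by rewrite E1 E2 cd XY.
    by move/IH ->.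
Qed.

Lemma comp_surj m X : is_composition m.+1 X -> exists2 b, size b = m & comp_of b = X.
Proof.
elim: m X => [|m IH] [|c X] //=; rewrite /is_composition /=.
- case/andP=> /andP[c0 Xp] /eqP s.
  have cE : c = 1 by lia.
  have X0 : sumn X = 0 by lia.
  case: X Xp X0 {s} => [|d X] /=; last by case/andP=> d0 _; lia.
  by move=> _ _; exists [::]; rewrite // cE.
- case/andP=> /andP[c0 Xp] /eqP s.
  case: c c0 s => [|[|c]] // _ s.
  + have [b sb Eb] : exists2 b, size b = m & comp_of b = X.
      apply: IH; rewrite /is_composition Xp /=; apply/eqP; lia.
    by exists (true :: b); rewrite /= ?sb ?Eb.
  + have [b sb Eb] : exists2 b, size b = m & comp_of b = c.+1 :: X.
      apply: IH; rewrite /is_composition /= Xp /=; apply/eqP; lia.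
    by exists (false :: b); rewrite /= ?sb ?Eb.
Qed.

Fixpoint bits m : seq (seq bool) :=
  if m is m'.+1 then map (cons true) (bits m') ++ map (cons false) (bits m')
  else [:: [::]].

Lemma size_bits m : size (bits m) = 2 ^ m.
Proof. by elim: m => //= m IH; rewrite size_cat !size_map IH expnS mul2n addnn. Qed.

Lemma mem_bits m b : (b \in bits m) = (size b == m).
Proof.
elim: m b => [|m IH] [|x b] //=.
- by rewrite mem_cat; apply/negP; case/orP=> /mapP[].
- rewrite mem_cat eqSS -IH; case: x.
  + rewrite (mem_map (fun u v (h : true :: u = true :: v) => congr1 behead h)).
    by case: (b \in bits m) => //=; apply/negP=> /mapP[].
  + rewrite (mem_map (fun u v (h : false :: u = false :: v) => congr1 behead h)).
    by rewrite orbC; case: (b \in bits m) => //=; apply/negP=> /mapP[].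
Qed.

Lemma uniq_bits m : uniq (bits m).
Proof.
elim: m => //= m IH; rewrite cat_uniq !map_inj_uniq // ?IH /=;
  try by move=> u v [].
rewrite andbT; apply/hasPn => u /mapP[v _ ->]; by apply/mapP => -[w _].
Qed.

Lemma rs_shift k X :
  flatten [seq nseq c i.+1 | '(i, c) <- zip (iota k.+1 (size X)) X] =
  map S (flatten [seq nseq c i.+1 | '(i, c) <- zip (iota k (size X)) X]).
Proof.
elim: X k => [|c X IH] k //=.
by rewrite map_cat map_nseq IH.
Qed.

Lemma rank_seq_cons c X : rank_seq (c :: X) = nseq c 1 ++ map S (rank_seq X).
Proof. by rewrite /rank_seq /= rs_shift. Qed.

Lemma size_rank_seq X : size (rank_seq X) = sumn X.
Proof.
elim: X => [|c X IH] //; by rewrite rank_seq_cons size_cat size_nseq size_map IH.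
Qed.

Fixpoint rk (b : seq bool) (j : nat) : nat :=
  match j, b with
  | 0, _ => 1
  | j'.+1, x :: b' => x + rk b' j'
  | _.+1, [::] => 1
  end.

Lemma rk_pos b j : 0 < rk b j.
Proof. elim: b j => [|x b IH] [|j] //=; by rewrite addn_gt0 IH orbT. Qed.

Lemma elt_rank0 b : elt_rank (comp_of b) 0 = 1.
Proof.
case: (comp_of_cons b) => c [X ->].
by rewrite /elt_rank rank_seq_cons.
Qed.

Lemma elt_rank_rk b j : j <= size b -> elt_rank (comp_of b) j = rk b j.
Proof.
elim: b j => [|x b IH] [|j] hj; rewrite ?elt_rank0 //.
- case: x hj => /= hj.
  + rewrite /= -IH //.
    rewrite /elt_rank rank_seq_cons /= (nth_map 0) //.
    by rewrite size_rank_seq comp_sum ltnS.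
  + rewrite /= add0n -IH //.
    case: (comp_of_cons b) => c [X ->] /=.
    by rewrite /elt_rank !rank_seq_cons.
Qed.

Lemma sum_bitsS m (F : seq bool -> nat) :
  \sum_(b <- bits m.+1) F b = \sum_(b <- bits m) (F (true :: b) + F (false :: b)).
Proof. by rewrite /= big_cat !big_map big_split. Qed.

Lemma sum_ordS k (F : nat -> nat) :
  \sum_(j < k.+1) F j = F 0 + \sum_(j < k) F j.+1.
Proof. by rewrite big_ord_recl; congr (_ + _); apply: eq_bigr => i _; rewrite lift0. Qed.

Lemma sumG x b k r : \sum_(j < k.+1) (rk (x::b) j == r.+1) =
  (r == 0) + \sum_(j < k) (x + rk b j == r.+1).
Proof. by rewrite (sum_ordS k (fun j => rk (x::b) j == r.+1)); case: r. Qed.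

Lemma sumGt b k r : \sum_(j < k.+1) (rk (true::b) j == r.+1) =
  (r == 0) + \sum_(j < k) (rk b j == r).
Proof. exact: sumG. Qed.
Lemma sumGf b k r : \sum_(j < k.+1) (rk (false::b) j == r.+1) =
  (r == 0) + \sum_(j < k) (rk b j == r.+1).
Proof. exact: sumG. Qed.

Lemma sumH x b k : \sum_(j < k.+1) rk (x::b) j = 1 + \sum_(j < k) (x + rk b j).
Proof. by rewrite (sum_ordS k (fun j => rk (x::b) j)). Qed.

Lemma sumHt b k : \sum_(j < k.+1) rk (true::b) j = 1 + \sum_(j < k) (1 + rk b j).
Proof. exact: sumH. Qed.
Lemma sumHf b k : \sum_(j < k.+1) rk (false::b) j = 1 + \sum_(j < k) rk b j.
Proof. exact: sumH. Qed.

Lemma sum_const_bits m c : \sum_(b <- bits m) c = 2 ^ m * c.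
Proof. by rewrite big_const_seq count_predT size_bits; elim: (2 ^ m) => //= k ->; rewrite mulSn. Qed.

Definition G m r := \sum_(b <- bits m) \sum_(j < m.+1) (rk b j == r).
Definition T N k := \sum_(k <= i < N.+1) 'C(N, i).
Definition H m := \sum_(b <- bits m) \sum_(j < m.+1) rk b j.

Lemma G0 m : G m 0 = 0.
Proof.
rewrite /G big1_seq // => b _; rewrite big1 // => j _.
by have := rk_pos b j; case: (rk b j).
Qed.

Lemma GS m r : G m.+1 r.+1 = 2 ^ m.+1 * (r == 0) + G m r + G m r.+1.
Proof.
rewrite /G sum_bitsS.
under eq_bigr => b _ do rewrite sumGt sumGf.
rewrite !big_split /= !sum_const_bits expnS; lia.
Qed.

Lemma T0 N : T N 0 = 2 ^ N.
Proof.
rewrite /T big_mkord -[2]/(1 + 1) (expnDn 1 1 N).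
by apply: eq_bigr => i _; rewrite !exp1n !muln1.
Qed.

Lemma Tpascal N k : T N.+1 k.+1 = T N k + T N k.+1.
Proof.
rewrite /T.
case: (leqP k N) => hk.
- rewrite big_add1 /=.
  under eq_bigr => i _ do rewrite binS.
  rewrite big_split /= addnC; congr (_ + _).
  rewrite -(big_add1 _ _ k N.+2 xpredT (fun i => 'C(N, i))) big_nat_recr //=.
  by rewrite bin_small // addn0.
- rewrite !big_geq //; lia.
Qed.

Lemma G_T m r : G m r.+1 = T m.+1 r.+1.
Proof.
elim: m r => [|m IH] r.
- rewrite /G /T /= big_cons big_nil big_ord1 /=.
  case: r => [|r]; first by rewrite big_nat1.
  by rewrite big_geq.
- rewrite GS; case: r => [|r].
  + by rewrite G0 IH [T m.+2 1]Tpascal T0 muln1 addn0.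
  + by rewrite !IH [T m.+2 _]Tpascal; lia.
Qed.

Lemma H_eq m : 4 * H m = 2 ^ m * (m.+1 * (m + 4)).
Proof.
elim: m => [|m IH]; first by rewrite /H /= big_cons big_nil big_ord1.
have -> : H m.+1 = 2 ^ m * (m + 3) + 2 * H m.
  rewrite /H sum_bitsS.
  under eq_bigr => b _ do rewrite sumHt sumHf big_split /= sum_nat_const card_ord muln1.
  rewrite !big_split /= !sum_const_bits.
  set S := \sum_(b <- bits m) _; set p := 2 ^ m; lia.
rewrite expnS. nia.
Qed.
Local Open Scope ring_scope.

Theorem mainTheorem5 (n : nat) (comps : seq (seq nat)) :
  (1 <= n)%N ->
  uniq comps ->
  (forall X, (X \in comps) = is_composition n X) ->
  (forall r : nat, (1 <= r <= n)%N ->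
     prob_rank n comps r =
       (n%:R * 2%:R ^+ n.-1)^-1 * (\sum_(r <= i < n.+1) 'C(n, i))%N%:R)
  /\ expected_rank n comps = (n%:R + 3%:R) / 4%:R.
Proof.
case: n => [|m] // _ Uc Mc; rewrite [m.+1.-1]/=.
have Pc : perm_eq comps (map comp_of (bits m)).
  apply: uniq_perm => //; first by rewrite map_inj_uniq ?uniq_bits //; exact: comp_of_inj.
  move=> X; rewrite Mc; apply/idP/mapP.
  - by case/comp_surj => b sb <-; exists b; rewrite // mem_bits sb.
  - case=> b; rewrite mem_bits => /eqP sb ->.
    by rewrite /is_composition comp_pos comp_sum sb eqxx.
have Sc : size comps = (2 ^ m)%N by rewrite (perm_size Pc) size_map size_bits.
have Bc : forall F : seq nat -> rat, \sum_(X <- comps) F X = \sum_(b <- bits m) F (comp_of b).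
  by move=> F; rewrite (perm_big _ Pc) big_map.
have n0 : (m.+1)%:R != 0 :> rat by rewrite pnatr_eq0.
have p0 : (2 ^ m)%:R != 0 :> rat by rewrite pnatr_eq0 expn_eq0.
split.
- case=> [|r] // /andP[_ hr].
  rewrite /prob_rank Bc Sc.
  have -> : \sum_(b <- bits m) ((m.+1)%:R^-1 * \sum_(j < m.+1) (elt_rank (comp_of b) j == r.+1)%:R)
      = (m.+1)%:R^-1 * (G m r.+1)%:R :> rat.
    rewrite -big_distrr /= /G natr_sum; congr (_ * _).
    apply: eq_big_seq => b; rewrite mem_bits => /eqP sb.
    rewrite natr_sum; apply: eq_bigr => j _.
    by rewrite elt_rank_rk // sb -ltnS.
  rewrite G_T /T -natrX invfM mulrA [X in X * _ = _]mulrC.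
  done.
- rewrite /expected_rank Bc Sc.
  have -> : \sum_(b <- bits m) ((m.+1)%:R^-1 * \sum_(j < m.+1) (elt_rank (comp_of b) j)%:R)
      = (m.+1)%:R^-1 * (H m)%:R :> rat.
    rewrite -big_distrr /= /H natr_sum; congr (_ * _).
    apply: eq_big_seq => b; rewrite mem_bits => /eqP sb.
    rewrite natr_sum; apply: eq_bigr => j _.
    by rewrite elt_rank_rk // sb -ltnS.
  have hH : (H m)%:R = (2 ^ m * (m.+1 * (m + 4)))%:R / 4%:R :> rat.
    by rewrite -H_eq natrM mulrC mulKf // pnatr_eq0.
  rewrite hH !natrM !natrD.
  field. by rewrite p0 andbT addrC natr1.
Qed.
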